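(* Let $\mathbb{Q}_2=\mathbb{Q}\times\mathbb{Q}$ and $$A:=\Big(\bigcup_{\mathbf{v}\in\mathbb{Q}_2}S(\mathbf{v},1)\Big)^c,\qquad S(\mathbf{v},1)=\{x\in\mathbb{R}^2:|x-\mathbf{v}|=1\}.$$ Then $A$ is a dense $G_\delta$ subset of $\mathbb{R}^2$ whose complement has two-dimensional Lebesgue measure zero, and $(A+S^1)\cap\mathbb{Q}_2=\emptyset$; in particular $A+S^1$ has empty interior.
   Context: $S^1$ is the Euclidean unit circle; $X+Y=\{x+y:x\in X,y\in Y\}$. *)

(* Defs.v *)
(* R^2 is modelled as R * R (product topology,
   product sigma-algebra, product of Lebesgue measures). *)
From HB Require Import structures.
From mathcomp Require Import all_boot all_order all_algebra.
From mathcomp Require Import all_classical all_reals all_analysis.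
From mathcomp Require Import borel_hierarchy.
Set Implicit Arguments. Unset Strict Implicit. Unset Printing Implicit Defensive.
Import Order.TTheory GRing.Theory Num.Theory.
Import numFieldNormedType.Exports.
Local Open Scope classical_set_scope.
Local Open Scope ring_scope.

Definition Q2 (R : realType) : set (R * R) :=
  [set v | exists p q : rat, v = (ratr p, ratr q)].

Definition dist2 (R : realType) (x y : R * R) : R :=
  Num.sqrt ((x.1 - y.1) ^+ 2 + (x.2 - y.2) ^+ 2).

Definition sphere2 (R : realType) (v : R * R) (r : R) : set (R * R) :=
  [set x | dist2 x v = r].

Definition S1 (R : realType) : set (R * R) := sphere2 (0, 0) 1.

Definition mink_sum (R : realType) (X Y : set (R * R)) : set (R * R) :=
  [set z | exists x y, X x /\ Y y /\ z = (x.1 + y.1, x.2 + y.2)].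

Definition Aset (R : realType) : set (R * R) :=
  ~` \bigcup_(v in @Q2 R) sphere2 v 1.

(* Main.v *)
Require Import Defs.
From HB Require Import structures.
From mathcomp Require Import all_boot all_order all_algebra.
From mathcomp Require Import all_classical all_reals all_analysis.
From mathcomp Require Import borel_hierarchy.
Import Order.TTheory GRing.Theory Num.Theory.
Import numFieldNormedType.Exports.
Local Open Scope classical_set_scope.
Local Open Scope ring_scope.
Section S.
Variable R : realType.

Lemma sphere1E (v : R * R) :
  sphere2 v 1 = [set x | (x.1 - v.1) ^+ 2 + (x.2 - v.2) ^+ 2 = 1].
Proof.
rewrite /sphere2 /dist2; apply/seteqP; split => x /=.
- move=> h.
  have s0 : 0 <= (x.1 - v.1) ^+ 2 + (x.2 - v.2) ^+ 2 by rewrite addr_ge0 ?sqr_ge0.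
  by rewrite -(sqr_sqrtr s0) h expr1n.
- by move=> ->; rewrite sqrtr1.
Qed.

Definition qe (n : nat) : R * R :=
  let pq := odflt (0%R, 0%R) (unpickle n) : rat * rat in (ratr pq.1, ratr pq.2).

Lemma Q2E (v : R * R) : Q2 v <-> exists n, v = qe n.
Proof.
split.
- move=> [p [q ->]]; exists (pickle (p, q)); by rewrite /qe pickleK.
- move=> [n ->]; rewrite /qe; by eexists; eexists.
Qed.

Lemma AsetCE : ~` (@Aset R) = \bigcup_n sphere2 (qe n) 1.
Proof.
rewrite /Aset setCK; apply/seteqP; split => x /=.
- by move=> [v /Q2E [n ->] h]; exists n.
- by move=> [n _ h]; exists (qe n) => //; apply/Q2E; exists n.
Qed.

Lemma AsetE : (@Aset R) = \bigcap_n ~` sphere2 (qe n) 1.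
Proof. by rewrite -[LHS]setCK AsetCE setC_bigcup. Qed.

Lemma sphere_closed (v : R * R) : closed (sphere2 v 1).
Proof.
rewrite sphere1E.
pose f := fun x : R * R => (x.1 - v.1) ^+ 2 + (x.2 - v.2) ^+ 2.
have -> : [set x | (x.1 - v.1) ^+ 2 + (x.2 - v.2) ^+ 2 = 1] = f @^-1` [set x | x = 1] by [].
apply: preimage_closed; last exact: closed_eq.
move=> z _.
rewrite /f.
apply: cvgD; rewrite expr2; apply: cvgM; apply: cvgB; try exact: cvg_cst.
all: first [exact: cvg_fst | exact: cvg_snd].
Qed.

Lemma sphere_meas (v : R * R) : measurable (sphere2 v 1).
Proof.
rewrite sphere1E.
pose f := fun x : R * R => (x.1 - v.1) ^+ 2 + (x.2 - v.2) ^+ 2.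
have mf : measurable_fun setT f.
  apply: measurable_realfun.measurable_funD; apply: measurable_realfun.measurable_funX; apply: measurable_realfun.measurable_funB;
  first [exact: measurable_fst | exact: measurable_snd | exact: measurable_cst].
have := mf measurableT [set 1] (measurable_set1 _).
by rewrite setTI.
Qed.

Lemma section_countable (x : R) : countable (xsection (~` (@Aset R)) x).
Proof.
pose g := fun t : rat * rat * bool =>
  ratr t.1.2 + (if t.2 then 1 else -1) * Num.sqrt (1 - (x - ratr t.1.1) ^+ 2) : R.
apply: (@sub_countable _ _ _ (range g)).
  apply: subset_card_le => y.
  rewrite /xsection /= in_setE AsetCE => -[n _]; rewrite sphere1E /qe /=.
  set pq := odflt _ _ => h.
  have e : Num.sqrt (1 - (x - ratr pq.1) ^+ 2) = `|y - ratr pq.2|.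
    by rewrite -h addrAC subrr add0r sqrtr_sqr.
  have [hb|hb] := lerP 0 (y - ratr pq.2).
  - exists (pq, true) => //; rewrite /g /= e mul1r ger0_norm //; by rewrite addrC subrK.
  - exists (pq, false) => //; rewrite /g /= e ltr0_norm // mulN1r opprK; by rewrite addrC subrK.
apply: sub_countable (card_image_le _ _) _.
exact: countableP.
Qed.

Lemma AsetC_null :
  ((@lebesgue_measure R) \x (@lebesgue_measure R))%E (~` @Aset R) = 0%E.
Proof.
rewrite /product_measure1; apply: integral0_eq => x _ /=.
exact: countable_lebesgue_measure0 (section_countable x).
Qed.

Lemma AsetC_meas : measurable (~` @Aset R).
Proof. rewrite AsetCE; apply: bigcup_measurable => n _; exact: sphere_meas. Qed.

Lemma nbhs_rect (z : R * R) (U : set (R * R)) : nbhs z U ->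
  exists e1 e2 : R, [/\ 0 < e1, 0 < e2 & (ball z.1 e1 `*` ball z.2 e2) `<=` U].
Proof.
move=> [[A B] /= [nA nB] sub].
move: nA => /nbhs_ballP [e1 e1p s1].
move: nB => /nbhs_ballP [e2 e2p s2].
exists e1, e2; split => // w [w1 w2]; apply: sub; split; [exact: s1 | exact: s2].
Qed.

Lemma mink_Q2 : mink_sum (@Aset R) (@S1 R) `&` @Q2 R = set0.
Proof.
apply/seteqP; split => // z [[x [y [Ax [S1y ez]]]] [p [q eq]]].
apply: Ax; exists (ratr p, ratr q); first by exists p, q.
rewrite -eq ez; move: S1y; rewrite /S1 /sphere2 /dist2 /= => <-.
by rewrite !subr0 !opprD !addrA !subrr !add0r !sqrrN.
Qed.

End S.

Theorem mainTheorem9 (R : realType) :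
  Gdelta (@Aset R) /\
  dense (@Aset R) /\
  measurable (~` @Aset R) /\
  ((@lebesgue_measure R) \x (@lebesgue_measure R))%E (~` @Aset R) = 0%E /\
  mink_sum (@Aset R) (@S1 R) `&` @Q2 R = set0 /\
  interior (mink_sum (@Aset R) (@S1 R)) = set0.
Proof.
split.
  exists (fun n => ~` sphere2 (qe R n) 1); last exact: AsetE.
  move=> n; exact: closed_openC (sphere_closed _ _).
split.
  move=> O [z Oz] oO.
  case: (pselect (O `&` @Aset R !=set0)) => // hn; exfalso.
  have sub : O `<=` ~` @Aset R by move=> w Ow Aw; apply: hn; exists w.
  have [e1 [e2 [e1p e2p sr]]] := @nbhs_rect R z O (oO z Oz).
  have le : (((@lebesgue_measure R) \x (@lebesgue_measure R)) (ball z.1 e1 `*` ball z.2 e2)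
     <= ((@lebesgue_measure R) \x (@lebesgue_measure R)) (~` @Aset R))%E.
    apply: le_measure; rewrite ?inE.
    - exact: measurableX (measurable_realfun.measurable_ball _ _) (measurable_realfun.measurable_ball _ _).
    - exact: AsetC_meas.
    - exact: subset_trans sr sub.
  move: le; rewrite product_measure1E; last 2 first.
    - exact: (measurable_realfun.measurable_ball z.1 e1).
    - exact: (measurable_realfun.measurable_ball z.2 e2).
  move=> le.
  have : ((e1 *+ 2)%:E * (e2 *+ 2)%:E <= 0)%E.
    rewrite -(lebesgue_measure_ball z.1 (ltW e1p)) -(lebesgue_measure_ball z.2 (ltW e2p)) -(AsetC_null R); exact: le.
  by rewrite -EFinM lee_fin leNgt mulr_gt0 // mulrn_wgt0.
split; first exact: AsetC_meas.
split; first exact: AsetC_null.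
split; first exact: mink_Q2.
apply/seteqP; split => // z /nbhs_rect [e1 [e2 [e1p e2p sr]]].
have [p hp] : exists p : rat, ratr p \in `]z.1 - e1, z.1 + e1[.
  by apply: rat_in_itvoo; rewrite ltrBlDr -addrA ltrDl addr_gt0.
have [q hq] : exists q : rat, ratr q \in `]z.2 - e2, z.2 + e2[.
  by apply: rat_in_itvoo; rewrite ltrBlDr -addrA ltrDl addr_gt0.
have : (mink_sum (@Aset R) (@S1 R) `&` @Q2 R) (ratr p, ratr q).
  split; last by exists p, q.
  by apply: sr; split => /=; rewrite ball_itv.
by rewrite (mink_Q2 R).
Qed.
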